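(* Let $A,X\in M_n(\mathbb{C})$ and $1\le m\le n$. Then $$\|D^m\operatorname{per}A\|\le\frac{n!}{(n-m)!}\|A\|^{n-m}$$ and $$|\operatorname{per}(A+X)-\operatorname{per}A|\le(\|A\|+\|X\|)^n-\|A\|^n.$$
   Context: $\operatorname{per}A=\sum_{\sigma\in S_n}\prod_ia_{i\sigma(i)}$ is the permanent. $D^m\operatorname{per}(A)(X^1,\ldots,X^m)=\frac{\partial^m}{\partial t_1\cdots\partial t_m}\big|_{t=0}\operatorname{per}(A+t_1X^1+\cdots+t_mX^m)$, and $\|D^m\operatorname{per}A\|=\sup_{\|X^1\|=\cdots=\|X^m\|=1}|D^m\operatorname{per}(A)(X^1,\ldots,X^m)|$. $\|\cdot\|$ on matrices is the operator (spectral) norm. *)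

(* Defs.v *)
(* Complex numbers are modelled by an arbitrary
   numClosedFieldType C (e.g. algC). *)
From HB Require Import structures.
From mathcomp Require Import all_boot all_order all_fingroup all_algebra.
Set Implicit Arguments. Unset Strict Implicit. Unset Printing Implicit Defensive.
Import Order.TTheory GRing.Theory Num.Theory.
Local Open Scope ring_scope.

Definition per (R : pzRingType) (n : nat) (A : 'M[R]_n) : R :=
  \sum_(s : 'S_n) \prod_(i < n) A i (s i).

(* Mixed derivative D^m per(A)(X^1,...,X^m)
   = d^m/(dt_1 ... dt_m)|_{t=0} per(A + t_1 X^1 + ... + t_m X^m),
   computed one variable at a time: the last variable t_m is adjoined as a
   polynomial indeterminate 'X, the remaining m-1 derivatives are taken
   recursively (with coefficients in {poly R}), and then the (formal)
   derivative in t_m is evaluated at t_m = 0. *)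
Fixpoint Dper (m : nat) :
  forall (R : comNzRingType) (n : nat), 'M[R]_n -> ('I_m -> 'M[R]_n) -> R :=
  match m return forall (R : comNzRingType) (n : nat),
                   'M[R]_n -> ('I_m -> 'M[R]_n) -> R with
  | 0 => fun R n A _ => per A
  | m'.+1 => fun R n A Xs =>
      (@Dper m' {poly R} n
         (map_mx polyC A + 'X *: map_mx polyC (Xs ord_max))
         (fun i => map_mx polyC (Xs (widen_ord (leqnSn m') i))))^`().[0]
  end.

Definition vnorm (C : numClosedFieldType) (n : nat) (v : 'cV[C]_n) : C :=
  sqrtC (\sum_(i < n) `|v i 0| ^+ 2).

Definition is_opnorm (C : numClosedFieldType) (n : nat) (A : 'M[C]_n) (c : C) : Prop :=
  (forall v : 'cV[C]_n, vnorm (A *m v) <= c * vnorm v) /\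
  (forall c' : C, (forall v : 'cV[C]_n, vnorm (A *m v) <= c' * vnorm v) -> c <= c').

(* Main.v *)
Require Import Defs.
From HB Require Import structures.
From mathcomp Require Import all_boot all_order all_fingroup all_algebra all_field.
Set Implicit Arguments. Unset Strict Implicit. Unset Printing Implicit Defensive.
Import Order.TTheory GRing.Theory Num.Theory.
Local Open Scope ring_scope.

Definition fupd n (f : {ffun 'I_n -> 'I_n}) (i j : 'I_n) : {ffun 'I_n -> 'I_n} :=
  [ffun k => if k == i then j else f k].

Lemma fupdE n (f : {ffun 'I_n -> 'I_n}) i j k : fupd f i j k = if k == i then j else f k.
Proof. by rewrite ffunE. Qed.

Lemma fupd_fupd n (f : {ffun 'I_n -> 'I_n}) i a b : fupd (fupd f i a) i b = fupd f i b.
Proof. by apply/ffunP => k; rewrite !fupdE; case: eqP. Qed.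

Lemma fupd_id n (f : {ffun 'I_n -> 'I_n}) i : fupd f i (f i) = f.
Proof. by apply/ffunP => k; rewrite !fupdE; case: eqP => // ->. Qed.

Lemma fupd_eq n (r : {ffun 'I_n -> 'I_n}) i : (fupd r i i == r) = (r i == i).
Proof.
apply/eqP/eqP => [<-|ri]; first by rewrite fupdE eqxx.
by have := fupd_id r i; rewrite ri.
Qed.

Lemma part_sum (R : nmodType) n (i : 'I_n) (G : {ffun 'I_n -> 'I_n} -> R) :
  \sum_f G f = \sum_(r : {ffun 'I_n -> 'I_n} | r i == i) \sum_a G (fupd r i a).
Proof.
rewrite exchange_big /= (partition_big (fun f : {ffun 'I_n -> 'I_n} => f i) xpredT) //=.
apply: eq_bigr => a _.
rewrite (reindex_onto (fun r => fupd r i a) (fun f => fupd f i i)) /=.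
  apply: eq_bigl => r; rewrite fupdE eqxx eqxx /= fupd_fupd fupd_eq //.
move=> f /eqP fi; by rewrite fupd_fupd -fi fupd_id.
Qed.

Definition sqn (C : numClosedFieldType) n (g : {ffun 'I_n -> 'I_n} -> C) :=
  \sum_f `|g f| ^+ 2.

Definition slot (C : numClosedFieldType) n (M : 'M[C]_n) (i : 'I_n)
  (g : {ffun 'I_n -> 'I_n} -> C) : {ffun 'I_n -> 'I_n} -> C :=
  fun f => \sum_j M (f i) j * g (fupd f i j).

Lemma vnorm_ge0 (C : numClosedFieldType) n (v : 'cV[C]_n) : 0 <= vnorm v.
Proof. by rewrite /vnorm sqrtC_ge0 sumr_ge0 // => i _; rewrite exprn_ge0. Qed.

Lemma vnorm_sq (C : numClosedFieldType) n (v : 'cV[C]_n) :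
  vnorm v ^+ 2 = \sum_i `|v i 0| ^+ 2.
Proof. by rewrite /vnorm sqrtCK. Qed.

Lemma slot_bound (C : numClosedFieldType) n (M : 'M[C]_n) (c : C) i g :
  (forall v, vnorm (M *m v) <= c * vnorm v) ->
  sqn (slot M i g) <= c ^+ 2 * sqn g.
Proof.
move=> HM; rewrite /sqn (part_sum i) [X in _ <= _ * X](part_sum i) mulr_sumr.
apply: ler_sum => r _.
pose v : 'cV[C]_n := \col_j g (fupd r i j).
have -> : \sum_a `|slot M i g (fupd r i a)| ^+ 2 = vnorm (M *m v) ^+ 2.
  rewrite vnorm_sq; apply: eq_bigr => a _; congr (`|_| ^+ 2).
  rewrite /slot !mxE fupdE eqxx; apply: eq_bigr => j _.
  by rewrite fupd_fupd mxE.
have -> : \sum_a `|g (fupd r i a)| ^+ 2 = vnorm v ^+ 2.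
  by rewrite vnorm_sq; apply: eq_bigr => a _; rewrite mxE.
rewrite -exprMn; apply: lerXn2r => //; rewrite nnegrE ?vnorm_ge0 //.
exact: le_trans (vnorm_ge0 _) (HM v).
Qed.

Definition agree n (k : nat) (h f : {ffun 'I_n -> 'I_n}) :=
  [forall i : 'I_n, (k <= i)%N ==> (h i == f i)].

Definition Tk (C : numClosedFieldType) n (Ms : 'I_n -> 'M[C]_n) (k : nat)
   (g : {ffun 'I_n -> 'I_n} -> C) : {ffun 'I_n -> 'I_n} -> C :=
  fun f => \sum_(h | agree k h f) (\prod_(i : 'I_n | (i < k)%N) Ms i (f i) (h i)) * g h.

Lemma Tk0 (C : numClosedFieldType) n (Ms : 'I_n -> 'M[C]_n) g f : Tk Ms 0 g f = g f.
Proof.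
rewrite /Tk (big_pred1 f); first (rewrite big_pred0 ?mul1r //; move=> i; exact: ltn0).
move=> h /=; rewrite /agree; apply/forallP/eqP => [H|->]; last by move=> i; rewrite eqxx implybT.
by apply/ffunP => i; apply/eqP; exact: (H i).
Qed.

Lemma agreeS n k (kn : (k < n)%N) (h f : {ffun 'I_n -> 'I_n}) j :
  agree k h (fupd f (Ordinal kn) j) = agree k.+1 h f && (h (Ordinal kn) == j).
Proof.
apply/forallP/andP => [H|[/forallP H1 /eqP hj] i].
  split; last by have := H (Ordinal kn); rewrite leqnn fupdE eqxx.
  apply/forallP => i; apply/implyP => ki; have := H i.
  rewrite fupdE (ltnW ki) /=; case: (i =P Ordinal kn) => [ei|//].
  by rewrite ei /= ltnn in ki.
apply/implyP => ki; rewrite fupdE; case: (i =P Ordinal kn) => [->|ne]; first by rewrite hj.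
have := H1 i; rewrite ltn_neqAle ki andbT.
suff -> : k != i by [].
by apply/eqP => ek; apply: ne; apply: val_inj; rewrite /= ek.
Qed.

Lemma TkS (C : numClosedFieldType) n (Ms : 'I_n -> 'M[C]_n) k (kn : (k < n)%N) g f :
  Tk Ms k.+1 g f = slot (Ms (Ordinal kn)) (Ordinal kn) (Tk Ms k g) f.
Proof.
set ko := Ordinal kn.
rewrite /slot /Tk.
rewrite (partition_big (fun h : {ffun 'I_n -> 'I_n} => h ko) xpredT) //=.
apply: eq_bigr => j _; rewrite mulr_sumr.
apply: eq_big => [h|h /andP[_ /eqP hj]]; first by rewrite agreeS.
rewrite (bigD1 ko) //= hj mulrA; congr (_ * _ * _).
apply: eq_big => [i|i /andP[_ ne]].
  by rewrite ltnS ltn_neqAle andbC.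
by rewrite fupdE (negbTE ne).
Qed.

Lemma Tk_bound (C : numClosedFieldType) n (Ms : 'I_n -> 'M[C]_n) (c : 'I_n -> C) g :
  (forall i, 0 <= c i) -> (forall i v, vnorm (Ms i *m v) <= c i * vnorm v) ->
  forall k, (k <= n)%N ->
  sqn (Tk Ms k g) <= (\prod_(i : 'I_n | (i < k)%N) c i ^+ 2) * sqn g.
Proof.
move=> c0 HM; elim=> [_|k IH kn].
  have -> : sqn (Tk Ms 0 g) = sqn g by apply: eq_bigr => f _; rewrite Tk0.
  by rewrite big_pred0 ?mul1r // => i; exact: ltn0.
set ko := Ordinal kn.
have -> : sqn (Tk Ms k.+1 g) = sqn (slot (Ms ko) ko (Tk Ms k g)).
  by apply: eq_bigr => f _; rewrite TkS.
apply: le_trans (slot_bound ko _ (HM ko)) _.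
rewrite (bigD1 ko) //= -[X in _ <= X]mulrA; apply: ler_wpM2l; first exact: exprn_ge0.
have -> : \prod_(i < n | (i < k.+1)%N && (i != ko)) c i ^+ 2 =
          \prod_(i < n | (i < k)%N) c i ^+ 2.
  by apply: eq_bigl => i; rewrite ltnS ltn_neqAle andbC.
exact: IH (ltnW kn).
Qed.

Definition Fm (R : pzRingType) n (Ms : 'I_n -> 'M[R]_n) : R :=
  \sum_(s : 'S_n) \sum_(t : 'S_n) \prod_i Ms i (s i) (t i).

Lemma sum_perm (R : nmodType) n (G : {ffun 'I_n -> 'I_n} -> R) :
  \sum_(s : 'S_n) G (pval s) = \sum_(f : {ffun 'I_n -> 'I_n} | injectiveb f) G f.
Proof.
rewrite (reindex_onto (fun s : 'S_n => pval s) (fun f : {ffun 'I_n -> 'I_n} => insubd (1%g : 'S_n) f)) /=.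
  apply: eq_bigl => s; by rewrite (valP s) /= valKd eqxx.
by move=> f fi; rewrite insubdK.
Qed.

Lemma cauchy_schwarz (C : numClosedFieldType) (I : finType) (P : pred I) (x : I -> C) :
  (forall i, x i \is Num.real) ->
  (\sum_(i | P i) x i) ^+ 2 <= #|P|%:R * \sum_(i | P i) x i ^+ 2.
Proof.
move=> xr.
have H : 0 <= \sum_(i | P i) \sum_(j | P j) (x i - x j) ^+ 2.
  by apply: sumr_ge0 => i _; apply: sumr_ge0 => j _; rewrite -realEsqr realB.
have E : \sum_(i | P i) \sum_(j | P j) (x i - x j) ^+ 2 =
    (#|P|%:R * \sum_(i | P i) x i ^+ 2 - (\sum_(i | P i) x i) ^+ 2) *+ 2.
  set S := \sum_(i | P i) x i; set Q := \sum_(i | P i) x i ^+ 2.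
  have inner : forall i, \sum_(j | P j) (x i - x j) ^+ 2 =
      x i ^+ 2 *+ #|P| - (x i * S) *+ 2 + Q.
    move=> i; under eq_bigr => j _ do rewrite sqrrB.
    rewrite !big_split /= sumrN sumr_const sumrMnl mulr_sumr //.
  under eq_bigr => i _ do rewrite inner.
  rewrite !big_split /= sumrN sumr_const.
  rewrite sumrMnl -/Q sumrMnl -mulr_suml -/S -expr2.
  by rewrite mulrnBl mulr2n mulr_natl addrAC.
rewrite E pmulrn_lge0 // subr_ge0 in H.
exact: H.
Qed.

Lemma Fm_bound (C : numClosedFieldType) n (Ms : 'I_n -> 'M[C]_n) (c : 'I_n -> C) :
  (forall i, 0 <= c i) -> (forall i v, vnorm (Ms i *m v) <= c i * vnorm v) ->
  `|Fm Ms| <= n`!%:R * \prod_i c i.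
Proof.
move=> c0 HM.
pose P := [pred f : {ffun 'I_n -> 'I_n} | injectiveb f].
pose u : {ffun 'I_n -> 'I_n} -> C := fun h => (injectiveb h)%:R.
pose w := Tk Ms n u.
have Pn : #|P| = n`!.
  by rewrite -cardsE card_inj_ffuns !card_ord ffactnn.
have wE : forall f, w f = \sum_(h : {ffun 'I_n -> 'I_n} | injectiveb h) \prod_i Ms i (f i) (h i).
  move=> f; rewrite /w /Tk [RHS]big_mkcond /=.
  apply: eq_big => [h|h _].
    by apply/forallP => i; rewrite leqNgt ltn_ord.
  rewrite /u; case: (injectiveb h); rewrite ?mulr1 ?mulr0 //.
  by apply: eq_bigl => i; rewrite ltn_ord.
have FE : Fm Ms = \sum_(f | P f) w f.
  transitivity (\sum_(f : {ffun 'I_n -> 'I_n} | injectiveb f)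
     \sum_(h : {ffun 'I_n -> 'I_n} | injectiveb h) \prod_i Ms i (f i) (h i)).
    rewrite -(sum_perm (fun f => \sum_(h : {ffun 'I_n -> 'I_n} | injectiveb h)
                                    \prod_i Ms i (f i) (h i))).
    apply: eq_bigr => s _.
    rewrite -(sum_perm (fun h => \prod_i Ms i (pval s i) (h i))).
    apply: eq_bigr => t _; apply: eq_bigr => i _; by rewrite !pvalE.
  by apply: eq_bigr => f _; rewrite wE.
pose S := \sum_(f | P f) `|w f|.
have S0 : 0 <= S by apply: sumr_ge0 => f _.
have pc0 : 0 <= \prod_i c i by apply: prodr_ge0.
rewrite FE; apply: le_trans (ler_norm_sum _ _ _) _; rewrite -/S.
have HS : S ^+ 2 <= (n`!%:R * \prod_i c i) ^+ 2.
  apply: le_trans (cauchy_schwarz _ _) _; first by move=> f; exact: normr_real.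
  rewrite Pn.
  have H1 : \sum_(f | P f) `|w f| ^+ 2 <= sqn w.
    rewrite /sqn [X in _ <= X](bigID P) /= lerDl; apply: sumr_ge0 => f _.
    exact: exprn_ge0.
  have H2 : sqn w <= (\prod_i c i) ^+ 2 * n`!%:R.
    apply: le_trans (Tk_bound u c0 HM (leqnn n)) _.
    have -> : sqn u = n`!%:R.
      rewrite /sqn /u (bigID P) /= -Pn -sumr_const addrC big1 ?add0r.
        by apply: eq_big => [f|f ->]; [rewrite inE | rewrite normr1 expr1n].
      by move=> f /negbTE ->; rewrite normr0 expr0n.
    rewrite prodrXl; apply: ler_wpM2r => //.
    have -> : \prod_(i : 'I_n | (i < n)%N) c i = \prod_i c i.
      by apply: eq_bigl => i; rewrite ltn_ord.
    exact: lexx.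
  apply: le_trans (ler_wpM2l (ler0n _ _) (le_trans H1 H2)) _.
  by rewrite [X in _ <= X]exprMn [X in _ <= X]mulrC mulrCA -expr2.
rewrite -(ler_pXn2r (n := 2)) // nnegrE ?S0 //.
by apply: mulr_ge0.
Qed.

Lemma coef01_prod (R : comNzRingType) (I : eqType) (s : seq I) (al be : I -> R) :
  uniq s ->
  (\prod_(i <- s) ((al i)%:P + 'X * (be i)%:P))`_1 =
     \sum_(j <- s) be j * \prod_(i <- s | i != j) al i /\
  (\prod_(i <- s) ((al i)%:P + 'X * (be i)%:P))`_0 = \prod_(i <- s) al i.
Proof.
elim: s => [_|x s IH /andP[xs us]].
  by rewrite !big_nil coefC coefC /=; split.
have [IH1 IH0] := IH us.
have c0 : forall i, ((al i)%:P + 'X * (be i)%:P)`_0 = al i.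
  by move=> i; rewrite coefD coefC coefXM /= addr0.
have c1 : forall i, ((al i)%:P + 'X * (be i)%:P)`_1 = be i.
  by move=> i; rewrite coefD coefC coefXM /= coefC /= add0r.
rewrite big_cons; split; last by rewrite coef0M IH0 c0 big_cons.
rewrite coefM big_ord_recl big_ord1 /= IH1 IH0 c0 c1 [RHS]big_cons [X in be x * X]big_cons eqxx /=.
have -> : \prod_(i <- s | i != x) al i = \prod_(i <- s) al i.
  rewrite big_seq_cond [RHS]big_seq_cond; apply: eq_bigl => i.
  by case: (boolP (i \in s)) => //= iS; case: eqP => // ex; by rewrite -ex iS in xs.
rewrite addrC; congr (_ + _).
rewrite mulr_sumr [LHS]big_seq [RHS]big_seq; apply: eq_bigr => j js.
rewrite big_cons.
have -> : (x != j) by apply/eqP => ex; rewrite ex js in xs.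
by rewrite mulrCA.
Qed.

Definition Ms (R : pzRingType) n m (A : 'M[R]_n) (Xs : 'I_m -> 'M[R]_n)
  (c : {ffun 'I_m -> 'I_n}) : 'I_n -> 'M[R]_n :=
  fun i => if [pick k | c k == i] is Some k then Xs k else A.

Lemma Ms_notin (R : pzRingType) n m (A : 'M[R]_n) Xs (c : {ffun 'I_m -> 'I_n}) i :
  i \notin codom c -> Ms A Xs c i = A.
Proof.
rewrite /Ms; case: pickP => // k /eqP <-; by rewrite codom_f.
Qed.

Lemma Ms_in (R : pzRingType) n m (A : 'M[R]_n) Xs (c : {ffun 'I_m -> 'I_n}) k :
  injectiveb c -> Ms A Xs c (c k) = Xs k.
Proof.
move/injectiveP => ic; rewrite /Ms; case: pickP => [k' /eqP/ic -> //|].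
by move/(_ k); rewrite eqxx.
Qed.

Lemma pick_none m n (c : {ffun 'I_m -> 'I_n}) i :
  ([pick k | c k == i] == None) = (i \notin codom c).
Proof.
case: pickP => [k /eqP <-|H]; first by rewrite codom_f.
apply/esym/negP => /codomP [k ek]; by move: (H k); rewrite ek eqxx.
Qed.

Definition ext n m (c : {ffun 'I_m -> 'I_n}) (j : 'I_n) : {ffun 'I_m.+1 -> 'I_n} :=
  [ffun k => if unlift ord_max k is Some k' then c k' else j].

Definition restr n m (c : {ffun 'I_m.+1 -> 'I_n}) : {ffun 'I_m -> 'I_n} :=
  [ffun k => c (widen_ord (leqnSn m) k)].

Lemma widen_lift m (k : 'I_m) : widen_ord (leqnSn m) k = lift ord_max k.
Proof. by apply: val_inj; rewrite /= /bump leqNgt ltn_ord. Qed.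

Lemma ext_max n m (c : {ffun 'I_m -> 'I_n}) j : ext c j ord_max = j.
Proof. by rewrite ffunE unlift_none. Qed.

Lemma ext_widen n m (c : {ffun 'I_m -> 'I_n}) j k : ext c j (widen_ord (leqnSn m) k) = c k.
Proof. by rewrite ffunE widen_lift liftK. Qed.

Lemma codom_ext n m (c : {ffun 'I_m -> 'I_n}) j : codom (ext c j) = rcons (codom c) j.
Proof.
rewrite !codomE enum_ordSr map_rcons ext_max -map_comp; congr rcons.
by apply: eq_map => k /=; rewrite ext_widen.
Qed.

Lemma injb_codom (aT : finType) (rT : eqType) (f : aT -> rT) : injectiveb f = uniq (codom f).
Proof. by rewrite codomE. Qed.

Lemma inj_ext n m (c : {ffun 'I_m -> 'I_n}) j :
  injectiveb (ext c j) = (j \notin codom c) && injectiveb c.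
Proof. by rewrite !injb_codom codom_ext rcons_uniq. Qed.

Lemma ext_restr n m (c : {ffun 'I_m.+1 -> 'I_n}) : ext (restr c) (c ord_max) = c.
Proof.
apply/ffunP => k; rewrite ffunE; case: unliftP => [k' ->|->] //.
by rewrite ffunE widen_lift.
Qed.

Lemma restr_ext n m (c : {ffun 'I_m -> 'I_n}) j : restr (ext c j) = c.
Proof. by apply/ffunP => k; rewrite ffunE ext_widen. Qed.

Lemma sum_inj_ext (V : nmodType) n m (G : {ffun 'I_m.+1 -> 'I_n} -> V) :
  \sum_(c : {ffun 'I_m.+1 -> 'I_n} | injectiveb c) G c =
  \sum_(c : {ffun 'I_m -> 'I_n} | injectiveb c) \sum_(j | j \notin codom c) G (ext c j).
Proof.
rewrite pair_big_dep /=.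
rewrite (reindex_onto (fun p : {ffun 'I_m -> 'I_n} * 'I_n => ext p.1 p.2)
                      (fun c => (restr c, c ord_max))) /=; last first.
  by move=> c _; rewrite ext_restr.
apply: eq_bigl => [[c j]] /=; rewrite inj_ext restr_ext ext_max eqxx andbT andbC //.
Qed.

Lemma Fm_const (R : comNzRingType) n (A : 'M[R]_n) : Fm (fun _ => A) = per A * n`!%:R.
Proof.
rewrite /Fm.
have H : forall s : 'S_n, \sum_(t : 'S_n) \prod_i A (s i) (t i) = per A.
  move=> s; rewrite /per [RHS](reindex_inj (mulgI s^-1)%g); apply: eq_bigr => t _.
  rewrite [RHS](reindex_inj (@perm_inj _ s)); apply: eq_bigr => i _.
  by rewrite permM permK.
under eq_bigr => s _ do rewrite H.
by rewrite sumr_const card_Sn mulr_natr.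
Qed.

Lemma Fm_step (R : comNzRingType) n m (A : 'M[R]_n) (Xs : 'I_m.+1 -> 'M[R]_n)
    (c : {ffun 'I_m -> 'I_n}) :
  (Fm (Ms (map_mx polyC A + 'X *: map_mx polyC (Xs ord_max))
          (fun i => map_mx polyC (Xs (widen_ord (leqnSn m) i))) c))`_1 =
  \sum_(j | j \notin codom c) \sum_(s : 'S_n) \sum_(t : 'S_n)
     Xs ord_max (s j) (t j) *
     \prod_(i | i != j) Ms A (fun k => Xs (widen_ord (leqnSn m) k)) c i (s i) (t i).
Proof.
set Xw := fun k => Xs (widen_ord (leqnSn m) k).
have E : forall i r q,
    Ms (map_mx polyC A + 'X *: map_mx polyC (Xs ord_max)) (fun k => map_mx polyC (Xw k)) c i r q
   = (Ms A Xw c i r q)%:P + 'X * (if i \in codom c then 0 else Xs ord_max r q)%:P.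
  move=> i r q; rewrite /Ms; case: pickP => [k ck|H].
    by rewrite -(eqP ck) codom_f polyC0 mulr0 addr0 mxE.
  have -> : i \in codom c = false.
    by apply/negbTE/negP => /codomP [k ek]; move: (H k); rewrite ek eqxx.
  by rewrite !mxE.
rewrite /Fm coef_sum.
transitivity (\sum_(s : 'S_n) \sum_(t : 'S_n) \sum_(j | j \notin codom c)
   Xs ord_max (s j) (t j) * \prod_(i | i != j) Ms A Xw c i (s i) (t i)).
  apply: eq_bigr => s _; rewrite coef_sum; apply: eq_bigr => t _.
  under eq_bigr => i _ do rewrite E.
  rewrite (proj1 (coef01_prod _ _ (index_enum_uniq _))).
  rewrite [RHS]big_mkcond; apply: eq_bigr => j _.
  by case: (j \in codom c) => /=; rewrite ?mul0r.
under eq_bigr => s _ do rewrite exchange_big.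
by rewrite exchange_big.
Qed.

Lemma Fm_eq (R : pzRingType) n (M1 M2 : 'I_n -> 'M[R]_n) :
  (forall i, M1 i = M2 i) -> Fm M1 = Fm M2.
Proof.
move=> H; apply: eq_bigr => s _; apply: eq_bigr => t _; apply: eq_bigr => i _.
by rewrite H.
Qed.

Lemma Ms_ext (R : pzRingType) n m (A : 'M[R]_n) (Xs : 'I_m.+1 -> 'M[R]_n)
   (c : {ffun 'I_m -> 'I_n}) j i :
  injectiveb c -> j \notin codom c -> i != j ->
  Ms A Xs (ext c j) i = Ms A (fun k => Xs (widen_ord (leqnSn m) k)) c i.
Proof.
move=> ic jc ij.
have iext : injectiveb (ext c j) by rewrite inj_ext jc ic.
case: (boolP (i \in codom c)) => [/codomP [k ->] | ni].
  by rewrite Ms_in // -[X in Ms _ _ _ X](ext_widen c j k) Ms_in.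
rewrite !Ms_notin // codom_ext mem_rcons in_cons negb_or ij //.
Qed.

Lemma Dper_formula m : forall (R : comNzRingType) n (A : 'M[R]_n) (Xs : 'I_m -> 'M[R]_n),
  Dper A Xs * n`!%:R = \sum_(c : {ffun 'I_m -> 'I_n} | injectiveb c) Fm (Ms A Xs c).
Proof.
elim: m => [|m IH] R n A Xs.
  rewrite /= -Fm_const.
  have E : forall c : {ffun 'I_0 -> 'I_n}, Fm (Ms A Xs c) = Fm (fun _ => A).
    move=> c; apply: Fm_eq => i; rewrite /Ms; case: pickP => // k; case: k => //.
  under eq_bigr => c _ do rewrite E.
  rewrite (eq_bigl (mem [set f : {ffun 'I_0 -> 'I_n} | injectiveb f])); last first.
    by move=> f; rewrite !inE.
  by rewrite sumr_const card_inj_ffuns !card_ord ffactn0.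
rewrite /= horner_coef0 coef_deriv mulr1n -coefMC polyC_natr IH coef_sum.
transitivity (\sum_(c : {ffun 'I_m -> 'I_n} | injectiveb c)
  \sum_(j | j \notin codom c) \sum_(s : 'S_n) \sum_(t : 'S_n)
     Xs ord_max (s j) (t j) *
     \prod_(i | i != j) Ms A (fun k => Xs (widen_ord (leqnSn m) k)) c i (s i) (t i)).
  by apply: eq_bigr => c _; exact: Fm_step.
rewrite (sum_inj_ext (fun c' => Fm (Ms A Xs c'))); apply: eq_bigr => c ic.
apply: eq_bigr => j jc.
have iext : injectiveb (ext c j) by rewrite inj_ext jc ic.
rewrite /Fm; apply: eq_bigr => s _; apply: eq_bigr => t _; rewrite [RHS](bigD1 j) //=.
have -> : Ms A Xs (ext c j) j = Xs ord_max.
  by rewrite -[X in Ms _ _ _ X](ext_max c j) Ms_in.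
congr (_ * _); apply: eq_bigr => i ij.
by rewrite Ms_ext.
Qed.

Lemma opnorm_ge0 (C : numClosedFieldType) n (M : 'M[C]_n) (c : C) :
  (0 < n)%N -> (forall v, vnorm (M *m v) <= c * vnorm v) -> 0 <= c.
Proof.
move=> n0 HM.
have vp : 0 < vnorm (const_mx 1 : 'cV[C]_n).
  rewrite /vnorm sqrtC_gt0.
  under eq_bigr => i _ do rewrite mxE normr1 expr1n.
  by rewrite sumr_const card_ord ltr0n.
by rewrite -(pmulr_lge0 _ vp); apply: le_trans (vnorm_ge0 _) (HM _).
Qed.

Lemma Fm_expand (R : comNzRingType) n (B D : 'I_n -> 'M[R]_n) :
  Fm (fun i => B i + D i) = \sum_(f : {ffun 'I_n -> bool}) Fm (fun i => if f i then D i else B i).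
Proof.
rewrite /Fm.
transitivity (\sum_(s : 'S_n) \sum_(t : 'S_n) \sum_(f : {ffun 'I_n -> bool})
   \prod_i (if f i then D i else B i) (s i) (t i)).
  apply: eq_bigr => s _; apply: eq_bigr => t _.
  rewrite -(bigA_distr_bigA (fun i (b : bool) => (if b then D i else B i) (s i) (t i))).
  by apply: eq_bigr => i _; rewrite big_bool /= mxE addrC.
under eq_bigr => s _ do rewrite exchange_big.
by rewrite exchange_big.
Qed.

Lemma partA (C : numClosedFieldType) n m (A : 'M[C]_n) (a : C) (Xs : 'I_m -> 'M[C]_n) :
  (1 <= m <= n)%N -> is_opnorm A a -> (forall i, is_opnorm (Xs i) 1) ->
  `|Dper A Xs| <= n`!%:R / (n - m)`!%:R * a ^+ (n - m).
Proof.
case/andP => m1 mn [HA _] HX.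
have n0 : (0 < n)%N by apply: leq_trans m1 mn.
have a0 : 0 <= a := opnorm_ge0 n0 HA.
have N0 : 0 < n`!%:R :> C by rewrite ltr0n fact_gt0.
have key : forall c : {ffun 'I_m -> 'I_n}, injectiveb c ->
    `|Fm (Ms A Xs c)| <= n`!%:R * a ^+ (n - m).
  move=> c ic.
  pose cc := fun i => if i \in codom c then 1 else a.
  have -> : a ^+ (n - m) = \prod_i cc i.
    rewrite (bigID (mem (codom c))) /= big1 ?mul1r; last by move=> i; rewrite /cc => ->.
    rewrite /cc (eq_bigr (fun _ => a)); last by move=> i /negbTE ->.
    rewrite (eq_bigl [predC codom c]) // prodr_const.
    have Hc := cardC (mem (codom c)); rewrite card_codom in Hc; last exact/injectiveP.
    rewrite !card_ord in Hc.
    have -> : #|[predC codom c]| = (n - m)%N.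
      by apply/eqP; rewrite -(eqn_add2l m) Hc subnKC.
    by [].
  apply: Fm_bound => [i|i v]; first by rewrite /cc; case: ifP.
  rewrite /cc; case: (boolP (i \in codom c)) => [/codomP [k ->] | ni].
    by rewrite Ms_in // ?codom_f //; exact: (HX k).1.
  by rewrite Ms_notin.
have H : `|Dper A Xs| * n`!%:R <= n`!%:R * a ^+ (n - m) * (n ^_ m)%:R.
  rewrite -{1}(ger0_norm (ltW N0)) -normrM Dper_formula.
  apply: le_trans (ler_norm_sum _ _ _) _.
  apply: le_trans (ler_sum _ key) _.
  rewrite (eq_bigl (mem [set f : {ffun 'I_m -> 'I_n} | injectiveb f])); last first.
    by move=> f; rewrite !inE.
  by rewrite sumr_const card_inj_ffuns !card_ord mulr_natr.
have F : (n ^_ m)%:R = n`!%:R / (n - m)`!%:R :> C.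
  by rewrite -(ffact_fact mn) natrM mulfK // pnatr_eq0 -lt0n fact_gt0.
rewrite -F -(ler_pM2r N0); apply: le_trans H _.
by rewrite mulrC mulrA mulrAC.
Qed.

Lemma partB (C : numClosedFieldType) n (A X : 'M[C]_n) (a x : C) :
  (0 < n)%N -> is_opnorm A a -> is_opnorm X x ->
  `|per (A + X) - per A| <= (a + x) ^+ n - a ^+ n.
Proof.
move=> n0 [HA _] [HX _].
have a0 : 0 <= a := opnorm_ge0 n0 HA.
have x0 : 0 <= x := opnorm_ge0 n0 HX.
have N0 : 0 < n`!%:R :> C by rewrite ltr0n fact_gt0.
pose f0 : {ffun 'I_n -> bool} := [ffun=> false].
have E : (per (A + X) - per A) * n`!%:R =
   \sum_(f : {ffun 'I_n -> bool} | f != f0) Fm (fun i => if f i then X else A).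
  rewrite mulrBl -!Fm_const.
  have := Fm_expand (fun _ : 'I_n => A) (fun _ => X); rewrite /= => ->.
  rewrite (bigD1 f0) //=.
  have -> : Fm (fun i => if f0 i then X else A) = Fm (fun _ => A).
    by apply: Fm_eq => i; rewrite ffunE.
  by rewrite addrAC subrr add0r.
have B : forall f : {ffun 'I_n -> bool}, f != f0 ->
    `|Fm (fun i => if f i then X else A)| <= n`!%:R * \prod_i (if f i then x else a).
  by move=> f _; apply: Fm_bound => [i|i v]; case: (f i).
have S : \sum_(f : {ffun 'I_n -> bool}) \prod_i (if f i then x else a) = (a + x) ^+ n.
  rewrite -(bigA_distr_bigA (fun i (b : bool) => if b then x else a)) /=.
  under eq_bigr => i _ do rewrite big_bool /=.
  by rewrite prodr_const card_ord addrC.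
have S' : \sum_(f : {ffun 'I_n -> bool} | f != f0) \prod_i (if f i then x else a)
     = (a + x) ^+ n - a ^+ n.
  rewrite -S [in RHS](bigD1 f0) //=.
  have -> : \prod_i (if f0 i then x else a) = a ^+ n.
    by rewrite (eq_bigr (fun _ => a)) ?prodr_const ?card_ord // => i _; rewrite ffunE.
  by rewrite addrAC subrr add0r.
have H : `|per (A + X) - per A| * n`!%:R <= n`!%:R * ((a + x) ^+ n - a ^+ n).
  rewrite -{1}(ger0_norm (ltW N0)) -normrM E.
  apply: le_trans (ler_norm_sum _ _ _) _.
  apply: le_trans (ler_sum _ B) _.
  by rewrite -mulr_sumr S'.
by rewrite -(ler_pM2r N0) [X in _ <= X]mulrC.
Qed.

Unset Implicit Arguments.

Theorem corollary3p6 (C : numClosedFieldType) (n m : nat) (A X : 'M[C]_n)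
    (a x : C) :
  (1 <= m <= n)%N -> is_opnorm A a -> is_opnorm X x ->
  (forall Xs : 'I_m -> 'M[C]_n, (forall i, is_opnorm (Xs i) 1) ->
     `|Dper A Xs| <= (n`!)%:R / ((n - m)`!)%:R * a ^+ (n - m)) /\
  `|per (A + X) - per A| <= (a + x) ^+ n - a ^+ n.
Proof.
move=> Hmn HA HX; split.
  by move=> Xs HXs; exact: partA.
have n0 : (0 < n)%N by case/andP: Hmn => m1 mn; exact: leq_trans m1 mn.
exact: partB.
Qed.
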